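(* For any $d,d'\in D$, the function $f:D'^2\to\mathbb{R}$ given by: for $x,y\in D$, $f(x,y)=0$ if $x=d$ or $y=d'$ and $f(x,y)=1$ otherwise; $f(d,0)=f(0,d')=f(0,0)=0$; $f(a,0)=\tfrac12$ for $a\in D\setminus\{d\}$; $f(0,b)=\tfrac12$ for $b\in D\setminus\{d'\}$ (the basic $k$-submodular relaxation of the soft version of $(x=d\lor y=d')$) is $k$-submodular representable.
   Context: $D=\{1,\dots,k\}$, $D'=\{0\}\cup D$. For a variable set $X$ and $v\in X$ let $X_v=\{v_i:i\in D\}$. An $(X,k)$-network is a directed network with nonnegative capacities $c$ on vertex set $\bigcup_{v\in X}X_v\cup\{s,t\}$; an $s$-$t$ cut $S$ has capacity the total capacity of edges leaving $S$. For $\phi:X\to D'$, $S_\phi=\{s\}\cup\{v_{\phi(v)}:\phi(v)\ne0\}$; the network represents $g$ if $c(S_\phi)=g(\phi)$ for all $\phi$. For an $s$-$t$ cut $S$, $\nu(S)=\{s\}\cup\{v_i:S\cap X_v=\{v_i\}\}$; the network is $k$-submodular if $c(S)\ge c(\nu(S))$ for every $s$-$t$ cut. A function of variables $X$ is $k$-submodular representable if some $k$-submodular $(X,k)$-network represents it. *)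

(* Defs.v *)
From HB Require Import structures.
From mathcomp Require Import all_boot all_order all_algebra.
From mathcomp Require Import reals.
Set Implicit Arguments. Unset Strict Implicit. Unset Printing Implicit Defensive.
Import Order.TTheory GRing.Theory Num.Theory.
Local Open Scope ring_scope.

(* Conventions: D = {1..k} is encoded by 'I_k (i : 'I_k stands for i+1);
   D' = {0} u D is encoded by option 'I_k (None stands for 0).
   A variable set X is a finType V.  Vertices of an (X,k)-network:
   inl (v, i) is v_i, inr true is s, inr false is t. *)

Definition vertex (V : finType) (k : nat) : finType := ((V * 'I_k)%type + bool)%type.
Definition src {V : finType} {k : nat} : vertex V k := inr true.
Definition snk {V : finType} {k : nat} : vertex V k := inr false.
Definition vtx {V : finType} {k : nat} (v : V) (i : 'I_k) : vertex V k := inl (v, i).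

Section Networks.
Variables (R : realType) (V : finType) (k : nat).

(* a directed network is given by its capacity function (0 = no edge) *)
Definition capacity := vertex V k -> vertex V k -> R.

Definition nonneg_cap (c : capacity) := forall u w, 0 <= c u w.

Definition st_cut (S : {set vertex V k}) := (src \in S) && (snk \notin S).

Definition cutcap (c : capacity) (S : {set vertex V k}) : R :=
  \sum_(u in S) \sum_(w in ~: S) c u w.

Definition S_of (phi : V -> option 'I_k) : {set vertex V k} :=
  src |: [set u | if u is inl (v, i) then phi v == Some i else false].

Definition nu (S : {set vertex V k}) : {set vertex V k} :=
  src |: [set u | if u is inl (v, i)
                  then [set j | vtx v j \in S] == [set i] else false].

Definition represents (c : capacity) (g : (V -> option 'I_k) -> R) :=
  forall phi, cutcap c (S_of phi) = g phi.

Definition ksubmodular_net (c : capacity) :=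
  forall S, st_cut S -> cutcap c S >= cutcap c (nu S).

Definition ksubmod_representable (g : (V -> option 'I_k) -> R) :=
  exists c : capacity, [/\ nonneg_cap c, ksubmodular_net c & represents c g].

End Networks.

Definition f_or (R : realType) (k : nat) (d d' : 'I_k) (a b : option 'I_k) : R :=
  match a, b with
  | Some x, Some y => if (x == d) || (y == d') then 0 else 1
  | Some x, None => if x == d then 0 else 1 / 2
  | None, Some y => if y == d' then 0 else 1 / 2
  | None, None => 0
  end.

(* Main.v *)
Require Import Defs.
From HB Require Import structures.
From mathcomp Require Import all_boot all_order all_algebra.
From mathcomp Require Import reals.
From mathcomp Require Import lra.
Set Implicit Arguments. Unset Strict Implicit. Unset Printing Implicit Defensive.
Import Order.TTheory GRing.Theory Num.Theory.
Local Open Scope ring_scope.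

Lemma sum_if_eq (R : realType) (T : finType) (A : {pred T}) (u0 : T) (X : R) :
  \sum_(u in A) (if u == u0 then X else 0) = if u0 \in A then X else 0.
Proof.
case: (boolP (u0 \in A)) => H.
  rewrite (bigD1 u0) //= eqxx big1 ?addr0 // => u /andP[_ /negbTE ->] //.
by apply: big1 => u Hu; case: eqP => // e; subst; rewrite Hu in H.
Qed.

Lemma Lcut (R : realType) (T : finType) (S : {set T}) u0 w0 (P : bool) (r : R) :
 \sum_(u in S) \sum_(w in ~: S) (if (u == u0) && (w == w0) && P then r else 0)
 = if (u0 \in S) && (w0 \notin S) && P then r else 0.
Proof.
rewrite (eq_bigr (fun u => if u == u0 then (if (w0 \notin S) && P then r else 0) else 0)).
  by rewrite sum_if_eq; case: (u0 \in S).
move=> u _; case: (u == u0) => /=; last by rewrite big1.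
rewrite (eq_bigr (fun w => if w == w0 then (if P then r else 0) else 0)).
  by rewrite sum_if_eq in_setC; case: (w0 \in S).
by move=> w _; case: (w == w0).
Qed.

Lemma sum_uniq (R : realType) (k : nat) (Q : pred 'I_k) (r : R) :
  (forall a b, Q a -> Q b -> a = b) ->
  \sum_a (if Q a then r else 0) = if [exists a, Q a] then r else 0.
Proof.
move=> H; case: existsP => [[a Qa]|nQ].
  rewrite (bigD1 a) //= Qa big1 ?addr0 // => b /negbTE nb.
  case: ifP => // Qb; by rewrite (H b a) ?eqxx in nb.
by apply: big1 => a _; case: ifP => // Qa; case: nQ; exists a.
Qed.

Lemma sum_ge_one (R : realType) (k : nat) (F : 'I_k -> R) a :
  (forall i, 0 <= F i) -> F a <= \sum_i F i.
Proof.
move=> H; rewrite (bigD1 a) //= lerDl; exact: sumr_ge0.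
Qed.

Lemma sum_pick (R : realType) (k : nat) (x : 'I_k) (F : 'I_k -> R) :
  \sum_a (if x == a then F a else 0) = F x.
Proof.
rewrite (bigD1 x) //= eqxx big1 ?addr0 // => a /negbTE; by rewrite eq_sym => ->.
Qed.

Lemma some_eq (T : eqType) (x y : T) : (Some x == Some y) = (x == y).
Proof. by apply/eqP/eqP => [[]|->]. Qed.

Definition cnet (R : realType) (k : nat) (d d' : 'I_k) : capacity R bool k :=
  fun u w => \sum_(a : 'I_k)
   ((if (u == vtx true a) && (w == vtx false d') && (a != d) then 1/2 else 0)
  + (if (u == vtx false a) && (w == vtx true d) && (a != d') then 1/2 else 0)).

Lemma cut_form (R : realType) (k : nat) (d d' : 'I_k) S :
  cutcap (cnet R d d') S =
  \sum_a (if (vtx true a \in S) && (vtx false d' \notin S) && (a != d) then 1/2 else 0)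
+ \sum_a (if (vtx false a \in S) && (vtx true d \notin S) && (a != d') then 1/2 else 0).
Proof.
rewrite /cutcap /cnet.
under eq_bigr do rewrite exchange_big.
rewrite exchange_big /= -big_split /=; apply: eq_bigr => a _.
under eq_bigr do rewrite big_split.
by rewrite big_split /= !Lcut.
Qed.

Lemma memS (k : nat) (phi : bool -> option 'I_k) v i :
  (vtx v i \in S_of phi) = (phi v == Some i).
Proof. by rewrite /S_of !inE. Qed.

Lemma memnu (k : nat) (S : {set vertex bool k}) v i :
  (vtx v i \in nu S) = ([set j | vtx v j \in S] == [set i]).
Proof. by rewrite /nu !inE. Qed.

Lemma memP (k : nat) (S : {set vertex bool k}) v i :
  (vtx v i \in S) = (i \in [set j | vtx v j \in S]).
Proof. by rewrite inE. Qed.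

Lemma half_ge0 (R : realType) : 0 <= (1/2 : R).
Proof. lra. Qed.

Lemma H1 (R : realType) (k : nat) (d d' : 'I_k) (Px Py : {set 'I_k}) :
  (exists a, (Px == [set a]) && ~~ (Py == [set d']) && (a != d)) ->
  (1/2 : R) <=
  \sum_a (if (a \in Px) && (d' \notin Py) && (a != d) then 1/2 else 0)
+ \sum_a (if (a \in Py) && (d \notin Px) && (a != d') then 1/2 else 0).
Proof.
have hF : forall (b : bool) i, 0 <= (fun _ : 'I_k => if b then 1/2 else 0 : R) i.
  by move=> b i; case: b => //; exact: half_ge0.
move=> [a /andP[/andP[/eqP HPx nPy] nad]].
case: (boolP (d' \in Py)) => Hd.
  have: ~~ (Py \subset [set d']).
    apply/negP => sub; move: nPy; apply/negP; rewrite negbK.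
    apply/eqP/setP => j; rewrite inE; apply/idP/eqP => [/(subsetP sub)|->//].
    by rewrite inE => /eqP.
  case/subsetPn => b Hb; rewrite inE => nb.
  rewrite -[X in X <= _]add0r; apply: lerD.
    by apply: sumr_ge0 => i _; case: ifP => _ //; exact: half_ge0.
  apply: le_trans (sum_ge_one b _); last first.
    by move=> i; case: ifP => _ //; exact: half_ge0.
  by rewrite Hb nb HPx inE eq_sym (negbTE nad).
rewrite -[X in X <= _]addr0; apply: lerD; last first.
  by apply: sumr_ge0 => i _; case: ifP => _ //; exact: half_ge0.
apply: le_trans (sum_ge_one a _); last first.
  by move=> i; case: ifP => _ //; exact: half_ge0.
by rewrite HPx set11 nad.
Qed.

Lemma key (R : realType) (k : nat) (d d' : 'I_k) (Px Py : {set 'I_k}) :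
  \sum_a (if (Px == [set a]) && ~~ (Py == [set d']) && (a != d) then 1/2 else 0)
+ \sum_a (if (Py == [set a]) && ~~ (Px == [set d]) && (a != d') then 1/2 else 0)
<= \sum_a (if (a \in Px) && (d' \notin Py) && (a != d) then 1/2 else 0)
+ \sum_a (if (a \in Py) && (d \notin Px) && (a != d') then 1/2 else 0) :> R.
Proof.
have U : forall (P : {set 'I_k}) (B : bool) e a b,
   (P == [set a]) && B && (a != e) -> (P == [set b]) && B && (b != e) -> a = b.
  move=> P B e a b /andP[/andP[/eqP -> _] _] /andP[/andP[/eqP /set1_inj // _] _].
have Q1 : \sum_a (if (Px == [set a]) && ~~ (Py == [set d']) && (a != d) then 1/2 else 0)
  = (if [exists a, (Px == [set a]) && ~~ (Py == [set d']) && (a != d)] then 1/2 else 0) :> R.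
  by apply: (@sum_uniq R k (fun a => (Px == [set a]) && ~~ (Py == [set d']) && (a != d))) => a b; apply: U.
have Q2 : \sum_a (if (Py == [set a]) && ~~ (Px == [set d]) && (a != d') then 1/2 else 0)
  = (if [exists a, (Py == [set a]) && ~~ (Px == [set d]) && (a != d')] then 1/2 else 0) :> R.
  by apply: (@sum_uniq R k (fun a => (Py == [set a]) && ~~ (Px == [set d]) && (a != d'))) => a b; apply: U.
rewrite Q1 Q2.
have g0 : forall (b : bool) (i : 'I_k), 0 <= (if b then 1/2 else 0 : R).
  by move=> b i; case: b => //; exact: half_ge0.
case: existsP => E1; case: existsP => E2.
- case: E1 => a /andP[/andP[/eqP HPx _] nad].
  case: E2 => b /andP[/andP[/eqP HPy _] nbd].
  apply: lerD.
    apply: le_trans (sum_ge_one a _); last by move=> i; exact: g0.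
    by rewrite HPx HPy set11 !inE eq_sym (negbTE nbd) nad.
  apply: le_trans (sum_ge_one b _); last by move=> i; exact: g0.
  by rewrite HPx HPy set11 !inE eq_sym (negbTE nad) nbd.
- by rewrite addr0; apply: H1.
- by rewrite add0r addrC; apply: H1.
- rewrite addr0; apply: addr_ge0; apply: sumr_ge0 => i _; exact: g0.
Qed.

Lemma sum_some (R : realType) (k : nat) (x e : 'I_k) (B : bool) (r : R) :
  \sum_i (if (Some x == Some i) && B && (i != e) then r else 0)
  = if B && (x != e) then r else 0.
Proof.
rewrite -(sum_pick x (fun i => if B && (i != e) then r else 0)).
by apply: eq_bigr => i _; rewrite some_eq; case: (x == i).
Qed.

Theorem lemma22 (R : realType) (k : nat) (d d' : 'I_k) :
  ksubmod_representable
    (fun phi : bool -> option 'I_k => f_or R d d' (phi true) (phi false)).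
Proof.
exists (cnet R d d'); split.
- move=> u w; apply: sumr_ge0 => a _; apply: addr_ge0; case: ifP => _ //;
    exact: half_ge0.
- move=> S _; rewrite !cut_form.
  under eq_bigr do rewrite !memnu.
  under [X in _ + X <= _]eq_bigr do rewrite !memnu.
  under [X in _ <= X + _]eq_bigr do rewrite ![vtx _ _ \in S]memP.
  under [X in _ <= _ + X]eq_bigr do rewrite ![vtx _ _ \in S]memP.
  exact: key.
- move=> phi; rewrite cut_form.
  under eq_bigr do rewrite !memS.
  under [X in _ + X]eq_bigr do rewrite !memS.
  case: (phi true) => [x|]; case: (phi false) => [y|] /=.
  + rewrite !sum_some !some_eq.
    case: (x =P d) => _; case: (y =P d') => _ /=; rewrite ?addr0 ?add0r //.
    lra.
  + by rewrite sum_some big1_eq addr0; case: (x == d).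
  + by rewrite sum_some big1_eq add0r; case: (y == d').
  + by rewrite big1_eq addr0.
Qed.
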